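(* Let $G$ be a graph and $k > \Gamma(G)$ an integer. If $D_k(G)$ is connected, then $D_{k+1}(G)$ is connected.
   Context: All graphs are finite and simple. A set $S \subseteq V(G)$ is a dominating set of $G$ if every vertex of $V(G)\setminus S$ is adjacent to a vertex of $S$; it is a minimal dominating set if no proper subset of it is a dominating set. $\gamma(G)$ is the minimum cardinality of a dominating set of $G$, and $\Gamma(G)$ is the maximum cardinality of a minimal dominating set of $G$. For an integer $k \ge \gamma(G)$, the $k$-dominating graph $D_k(G)$ is the graph whose vertices are the dominating sets of $G$ of cardinality at most $k$, with two such sets $A,B$ adjacent if and only if their symmetric difference $(A\setminus B)\cup(B\setminus A)$ consists of exactly one vertex of $G$. *)

(* Defs.v *)
From mathcomp Require Import all_boot.
Set Implicit Arguments. Unset Strict Implicit. Unset Printing Implicit Defensive.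

Definition simple_graph (T : finType) (e : rel T) : Prop :=
  symmetric e /\ irreflexive e.

Definition dominating (T : finType) (e : rel T) (S : {set T}) : bool :=
  [forall v, (v \notin S) ==> [exists u in S, e v u]].

Definition minimal_dominating (T : finType) (e : rel T) (S : {set T}) : bool :=
  dominating e S && [forall S' : {set T}, (S' \proper S) ==> ~~ dominating e S'].

Definition upper_domination (T : finType) (e : rel T) : nat :=
  \max_(S : {set T} | minimal_dominating e S) #|S|.

Definition dk_vertex (T : finType) (e : rel T) (k : nat) (S : {set T}) : bool :=
  dominating e S && (#|S| <= k).

Definition dk_adj (T : finType) (e : rel T) (k : nat) : rel {set T} :=
  fun A B => [&& dk_vertex e k A, dk_vertex e k B &
              #|(A :\: B) :|: (B :\: A)| == 1].

Definition dk_connected (T : finType) (e : rel T) (k : nat) : Prop :=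
  forall A B : {set T}, dk_vertex e k A -> dk_vertex e k B ->
    connect (dk_adj e k) A B.

(* Main.v *)
Require Import Defs.
From mathcomp Require Import all_boot.

Lemma dom_sup (T : finType) (e : rel T) (S S' : {set T}) :
  dominating e S -> S \subset S' -> dominating e S'.
Proof.
move=> /forallP HS sub; apply/forallP => v; apply/implyP => vS'.
have vS : v \notin S by apply: contra vS'; apply: (subsetP sub).
have /existsP [u /andP [uS euv]] := implyP (HS v) vS.
by apply/existsP; exists u; rewrite (subsetP sub u uS).
Qed.

Lemma adj_sym (T : finType) (e : rel T) k A B :
  dk_adj e k A B -> dk_adj e k B A.
Proof. by case/and3P => a b c; rewrite /dk_adj a b setUC c. Qed.

Lemma conn_mono (T : finType) (e : rel T) k A B :
  connect (dk_adj e k) A B -> connect (dk_adj e k.+1) A B.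
Proof.
apply: connect_sub => X Y /and3P [/andP [dX cX] /andP [dY cY] c].
apply: connect1; rewrite /dk_adj /dk_vertex dX dY c.
by rewrite (leq_trans cX) ?(leq_trans cY).
Qed.

Lemma to_k (T : finType) (e : rel T) k A :
  upper_domination e < k -> dk_vertex e k.+1 A ->
  exists B, [/\ dk_vertex e k B, connect (dk_adj e k.+1) A B &
                connect (dk_adj e k.+1) B A].
Proof.
move=> hG /andP [dA cA].
case: (leqP #|A| k) => hk.
  by exists A; rewrite /dk_vertex dA hk; split...
have eA : #|A| = k.+1 by apply/eqP; rewrite eqn_leq cA hk.
have nmin : ~~ minimal_dominating e A.
  apply/negP => mA.
  have := @leq_bigmax_cond _ _ (fun S : {set T} => #|S|) _ mA.
  rewrite -/(upper_domination e) eA => h.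
  by move: (leq_ltn_trans h hG) => /ltnW; rewrite ltnn.
move: nmin; rewrite /minimal_dominating dA /= negb_forall => /existsP [S'].
rewrite negb_imply negbK => /andP [/properP [sub [x xA xS']] dS'].
have dB : dominating e (A :\ x).
  apply: dom_sup dS' _; apply/subsetP => y yS; rewrite !inE (subsetP sub y yS) andbT.
  by apply: contraNneq xS' => <-.
have cB : #|A :\ x| = k by move: (cardsD1 x A); rewrite xA eA add1n => -[].
have sd : (A :\: (A :\ x)) :|: ((A :\ x) :\: A) = [set x].
  apply/setP => y; rewrite !inE; case: (eqVneq y x) => [->|]; rewrite ?xA //=.
  by case: (y \in A).
have adj : dk_adj e k.+1 A (A :\ x).
  by rewrite /dk_adj /dk_vertex dA cA dB cB leqnSn sd cards1.
exists (A :\ x); split.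
- by rewrite /dk_vertex dB cB leqnn.
- exact: connect1.
- exact/connect1/adj_sym.
Qed.

Theorem lemma4 (T : finType) (e : rel T) (k : nat) :
  simple_graph e ->
  upper_domination e < k ->
  dk_connected e k ->
  dk_connected e k.+1.
Proof.
move=> _ hG hC A B vA vB.
have [A' [vA' cA _]] := @to_k _ _ _ _ hG vA.
have [B' [vB' _ cB]] := @to_k _ _ _ _ hG vB.
apply: connect_trans cA _; apply: connect_trans _ cB.
exact/conn_mono/hC.
Qed.
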